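(* For each $t\in[0,1)$ the operator $C_t\colon H^\infty\to H^\infty$ is continuous. Moreover, $\|C_0\|_{H^\infty\to H^\infty}=1$ and $\|C_t\|_{H^\infty\to H^\infty}=-\frac{\log(1-t)}{t}$ for every $t\in(0,1)$.
   Context: $\mathbb{D}=\{z\in\mathbb{C}:|z|<1\}$; $H^\infty$ is the Banach space of bounded holomorphic functions on $\mathbb{D}$ with norm $\|f\|_\infty=\sup_{z\in\mathbb{D}}|f(z)|$. For $t\in[0,1]$ the generalized Cesàro operator $C_t$ is defined on holomorphic $f$ on $\mathbb{D}$ by $C_tf(0)=f(0)$ and $C_tf(z)=\frac{1}{z}\int_0^z\frac{f(\xi)}{1-t\xi}\,d\xi$ for $z\in\mathbb{D}\setminus\{0\}$. *)

(* Defs.v *)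
From Stdlib Require Import Reals.
From Coquelicot Require Import Coquelicot.
Open Scope R_scope.

Definition in_disc (z : C) : Prop := Cmod z < 1.

Definition holomorphic_on_disc (f : C -> C) : Prop :=
  forall z : C, in_disc z -> ex_derive (K := C_AbsRing) (V := C_NormedModule) f z.

Definition Hinf (f : C -> C) : Prop :=
  holomorphic_on_disc f /\ exists M : R, forall z : C, in_disc z -> Cmod (f z) <= M.

(* Sup norm over the disc (meaningful for bounded f). *)
Definition supnorm (f : C -> C) : R :=
  real (Lub_Rbar (fun r => exists z : C, in_disc z /\ r = Cmod (f z))).

(* Generalized Cesaro operator:  C_t f(0) = f(0) and, for z <> 0,
   C_t f(z) = (1/z) * int_{[0,z]} f(xi)/(1 - t xi) d xi, the line integral
   along the segment [0,z] parametrized by xi = s z, s in [0,1]. *)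
Definition cesaro (t : R) (f : C -> C) (z : C) : C :=
  if Req_EM_T (Cmod z) 0 then f (RtoC 0)
  else Cmult (Cinv z)
         (@RInt C_R_CompleteNormedModule
            (fun s : R => Cmult (Cdiv (f (Cmult (RtoC s) z))
                                      (Cminus (RtoC 1) (Cmult (RtoC t) (Cmult (RtoC s) z))))
                                z)
            0 1).

Definition cesaro_opnorm_is (t N : R) : Prop :=
  is_lub (fun r => exists f : C -> C, Hinf f /\ supnorm f <= 1 /\ r = supnorm (cesaro t f)) N.

(* Main.v *)
Require Import Defs.
From Stdlib Require Import Reals Lra Lia.
From Coquelicot Require Import Coquelicot.
Open Scope R_scope.


Lemma normCR (x : C) : @norm R_AbsRing C_R_NormedModule x = Cmod x.
Proof.
  destruct x as [a b]. unfold norm; simpl. unfold prod_norm, Cmod; simpl.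
  assert (E : forall u : R, Rabs u * (Rabs u * 1) = u * (u * 1)).
  { intros; rewrite !Rmult_1_r, <- Rabs_mult; apply Rabs_right; nra. }
  change (norm a) with (Rabs a). change (norm b) with (Rabs b). rewrite !E. reflexivity.
Qed.

Lemma normC (x : C) : @norm C_AbsRing C_NormedModule x = Cmod x.
Proof. reflexivity. Qed.

Lemma Cmod_sub_sym (a b : C) : Cmod (a - b) = Cmod (b - a).
Proof. replace (a - b)%C with (- (b - a))%C by ring. apply Cmod_opp. Qed.

Lemma Cmod_tri_sub (a b c : C) : Cmod (a - c) <= Cmod (a - b) + Cmod (b - c).
Proof. replace (a - c)%C with ((a - b) + (b - c))%C by ring. apply Cmod_triangle. Qed.

Lemma ball_of_Cmod (z w : C) (d : R) : Cmod (w - z) < d -> @ball C_UniformSpace z d w.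
Proof.
  intros H. apply (@norm_compat1 C_AbsRing C_NormedModule). exact H.
Qed.

Lemma Cmod_of_ball (z w : C) (d : posreal) : @ball C_UniformSpace z d w -> Cmod (w - z) < sqrt 2 * d.
Proof.
  intros H. apply (@norm_compat2 C_AbsRing C_NormedModule) in H. exact H.
Qed.

Lemma sqrt2_pos : 0 < sqrt 2.
Proof. apply sqrt_lt_R0; lra. Qed.

Lemma derive_of_eps (f : C -> C) (z l : C) :
  (forall eps, 0 < eps -> exists d, 0 < d /\ forall w, Cmod (w - z) < d ->
      Cmod (f w - f z - l * (w - z)) <= eps * Cmod (w - z)) ->
  is_derive (K := C_AbsRing) (V := C_NormedModule) f z l.
Proof.
  intros H. split.
  - apply (@is_linear_scal_l C_AbsRing C_NormedModule).
  - intros x Hx. apply (@is_filter_lim_locally_unique C_AbsRing (AbsRing_NormedModule C_AbsRing)) in Hx. subst x.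
    intros eps. destruct (H eps (cond_pos eps)) as [d [Hd Hw]].
    exists (mkposreal d Hd). intros w Hb.
    specialize (Hw w Hb). rewrite !normC.
    change (norm (minus w z)) with (Cmod (w - z)).
    eapply Rle_trans; [|exact Hw]. right. f_equal.
    unfold minus, plus, opp, scal; simpl. unfold mult; simpl. ring.
Qed.

Lemma eps_of_derive (f : C -> C) (z l : C) :
  is_derive (K := C_AbsRing) (V := C_NormedModule) f z l ->
  forall eps, 0 < eps -> exists d, 0 < d /\ forall w, Cmod (w - z) < d ->
      Cmod (f w - f z - l * (w - z)) <= eps * Cmod (w - z).
Proof.
  intros [_ H] eps Heps.
  specialize (H z (fun P HP => HP)).
  destruct (H (mkposreal eps Heps)) as [d Hd].
  exists d. split; [apply cond_pos|]. intros w Hw.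
  specialize (Hd w Hw). rewrite !normC in Hd.
  change (norm (minus w z)) with (Cmod (w - z)) in Hd.
  eapply Rle_trans; [|exact Hd]. right. f_equal.
  unfold minus, plus, opp, scal; simpl. unfold mult; simpl. ring.
Qed.

Definition contC (g : C -> C) (z : C) : Prop :=
  forall eps, 0 < eps -> exists d, 0 < d /\ forall w, Cmod (w - z) < d -> Cmod (g w - g z) < eps.

Definition contD (g : C -> C) : Prop := forall w, Cmod w < 1 -> contC g w.

Lemma contC_of_derive (f : C -> C) z l :
  is_derive (K := C_AbsRing) (V := C_NormedModule) f z l -> contC f z.
Proof.
  intros H eps Heps. destruct (eps_of_derive f z l H 1 Rlt_0_1) as [d [Hd Hw]].
  assert (Hl := Cmod_ge_0 l).
  exists (Rmin d (eps / (Cmod l + 2))). split.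
  { apply Rmin_pos; auto. apply Rdiv_lt_0_compat; lra. }
  intros w Hwz. assert (H1 : Cmod (w - z) < d) by (eapply Rlt_le_trans; [exact Hwz| apply Rmin_l]).
  assert (H2 : Cmod (w - z) < eps / (Cmod l + 2)) by (eapply Rlt_le_trans; [exact Hwz| apply Rmin_r]).
  specialize (Hw w H1).
  replace (f w - f z)%C with ((f w - f z - l * (w - z)) + l * (w - z))%C by ring.
  eapply Rle_lt_trans; [apply Cmod_triangle|]. rewrite Cmod_mult.
  assert (Hp := Cmod_ge_0 (w - z)).
  apply (Rmult_lt_compat_l (Cmod l + 2)) in H2; [|lra].
  replace ((Cmod l + 2) * (eps / (Cmod l + 2))) with eps in H2 by (field; lra).
  nra.
Qed.

Lemma contD_of_hol (f : C -> C) : holomorphic_on_disc f -> contD f.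
Proof.
  intros H w Hw. destruct (H w Hw) as [l Hl]. eapply contC_of_derive; eauto.
Qed.

Definition seg (a b : C) (s : R) : C := (a + RtoC s * (b - a))%C.

Definition SI (g : C -> C) (a b : C) : C :=
  @RInt C_R_CompleteNormedModule (fun s => (g (seg a b s) * (b - a))%C) 0 1.

Lemma plus_CR (x y : C) : @plus C_R_NormedModule x y = (x + y)%C.
Proof. destruct x, y; reflexivity. Qed.
Lemma minus_CR (x y : C) : @minus C_R_NormedModule x y = (x - y)%C.
Proof. destruct x, y; reflexivity. Qed.
Lemma opp_CR (x : C) : @opp C_R_NormedModule x = (- x)%C.
Proof. destruct x; reflexivity. Qed.
Lemma scal_CR (r : R) (x : C) : @scal R_Ring C_R_NormedModule r x = (RtoC r * x)%C.
Proof. destruct x; unfold scal; simpl. unfold prod_scal, Cmult, RtoC; simpl.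
  unfold scal; simpl. unfold mult; simpl. f_equal; ring. Qed.
Lemma zero_CR : @zero C_R_NormedModule = RtoC 0.
Proof. reflexivity. Qed.

Lemma RC_plus (x y : R) : RtoC (x + y) = (RtoC x + RtoC y)%C.
Proof. unfold RtoC, Cplus; simpl. f_equal; ring. Qed.
Lemma RC_minus (x y : R) : RtoC (x - y) = (RtoC x - RtoC y)%C.
Proof. unfold RtoC, Cminus, Cplus, Copp; simpl. f_equal; ring. Qed.
Lemma RC_mult (x y : R) : RtoC (x * y) = (RtoC x * RtoC y)%C.
Proof. unfold RtoC, Cmult; simpl. f_equal; ring. Qed.
Lemma RC_opp (x : R) : RtoC (- x) = (- RtoC x)%C.
Proof. unfold RtoC, Copp; simpl. f_equal; ring. Qed.
Lemma RC_div (x y : R) : y <> 0 -> RtoC (x / y) = (RtoC x / RtoC y)%C.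
Proof. intros H. unfold Rdiv, Cdiv. rewrite RC_mult, RtoC_inv; auto. Qed.

Lemma Cmod_RtoC_nonneg (r : R) : 0 <= r -> Cmod (RtoC r) = r.
Proof. intros. rewrite Cmod_R. apply Rabs_right. lra. Qed.

Lemma cont_R_C (F : R -> C) (s0 : R) :
  (forall eps, 0 < eps -> exists d, 0 < d /\ forall s, Rabs (s - s0) < d -> Cmod (F s - F s0) < eps) ->
  @continuous R_UniformSpace C_R_NormedModule F s0.
Proof.
  intros H. unfold continuous. apply (filterlim_locally (F := locally s0)).
  intros eps. destruct (H eps (cond_pos eps)) as [d [Hd Hs]].
  exists (mkposreal d Hd). intros s Hb.
  apply (@norm_compat1 R_AbsRing C_R_NormedModule).
  rewrite normCR, minus_CR. apply Hs. exact Hb.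
Qed.

Lemma seg_bound (a b : C) (s : R) : 0 <= s <= 1 ->
  Cmod (seg a b s) <= (1 - s) * Cmod a + s * Cmod b.
Proof.
  intros Hs. unfold seg.
  replace (a + RtoC s * (b - a))%C with (RtoC (1 - s) * a + RtoC s * b)%C.
  2:{ rewrite RC_minus. ring. }
  eapply Rle_trans; [apply Cmod_triangle|]. rewrite !Cmod_mult.
  rewrite !Cmod_RtoC_nonneg by lra. lra.
Qed.

Lemma seg_in (a b : C) (s : R) : 0 <= s <= 1 -> Cmod a < 1 -> Cmod b < 1 -> Cmod (seg a b s) < 1.
Proof.
  intros Hs Ha Hb. eapply Rle_lt_trans; [apply seg_bound; auto|].
  assert (H1 := Cmod_ge_0 a). assert (H2 := Cmod_ge_0 b).
  destruct (Rle_lt_dec s (1/2)); nra.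
Qed.

Lemma seg_diff (a b : C) (s s0 : R) : Cmod (seg a b s - seg a b s0) = Rabs (s - s0) * Cmod (b - a).
Proof.
  unfold seg. replace (a + RtoC s * (b - a) - (a + RtoC s0 * (b - a)))%C with (RtoC (s - s0) * (b - a))%C.
  2:{ rewrite RC_minus. ring. }
  rewrite Cmod_mult, Cmod_R. reflexivity.
Qed.

Lemma cont_integrand (g : C -> C) (a b : C) (s0 : R) :
  contC g (seg a b s0) ->
  @continuous R_UniformSpace C_R_NormedModule (fun s => (g (seg a b s) * (b - a))%C) s0.
Proof.
  intros Hg. apply cont_R_C. intros eps Heps.
  assert (Hba := Cmod_ge_0 (b - a)).
  destruct (Hg (eps / (Cmod (b - a) + 1))) as [d [Hd Hw]].
  { apply Rdiv_lt_0_compat; lra. }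
  exists (d / (Cmod (b - a) + 1)). split. { apply Rdiv_lt_0_compat; lra. }
  intros s Hs.
  replace (g (seg a b s) * (b - a) - g (seg a b s0) * (b - a))%C with
    ((g (seg a b s) - g (seg a b s0)) * (b - a))%C by ring.
  rewrite Cmod_mult.
  assert (Hd2 : Cmod (seg a b s - seg a b s0) < d).
  { rewrite seg_diff. assert (Ha := Rabs_pos (s - s0)).
    apply (Rmult_lt_compat_r (Cmod (b - a) + 1)) in Hs; [|lra].
    replace (d / (Cmod (b - a) + 1) * (Cmod (b - a) + 1)) with d in Hs by (field; lra). nra. }
  specialize (Hw _ Hd2).
  assert (Hm := Cmod_ge_0 (g (seg a b s) - g (seg a b s0))).
  apply (Rmult_lt_compat_r (Cmod (b - a) + 1)) in Hw; [|lra].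
  replace (eps / (Cmod (b - a) + 1) * (Cmod (b - a) + 1)) with eps in Hw by (field; lra). nra.
Qed.

Lemma ex_RInt_seg (g : C -> C) (a b : C) :
  contD g -> Cmod a < 1 -> Cmod b < 1 ->
  @ex_RInt C_R_NormedModule (fun s => (g (seg a b s) * (b - a))%C) 0 1.
Proof.
  intros Hg Ha Hb. apply (@ex_RInt_continuous C_R_CompleteNormedModule).
  intros s Hs. rewrite Rmin_left, Rmax_right in Hs by lra.
  apply cont_integrand. apply Hg. apply seg_in; auto.
Qed.

Lemma is_RInt_SI (g : C -> C) (a b : C) :
  contD g -> Cmod a < 1 -> Cmod b < 1 ->
  @is_RInt C_R_NormedModule (fun s => (g (seg a b s) * (b - a))%C) 0 1 (SI g a b).
Proof.
  intros. apply (@RInt_correct C_R_CompleteNormedModule). apply ex_RInt_seg; auto.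
Qed.

Ltac Cring := match goal with |- ?x = ?y => change (@eq C x y) end; ring.

Lemma C2_neq0 : RtoC 2 <> 0%C.
Proof. intros H. injection H. lra. Qed.
Lemma RC_half : RtoC (1/2) = (/ RtoC 2)%C.
Proof. unfold Cinv, RtoC; simpl. f_equal; field. Qed.

Lemma RC_m1 : RtoC (-1) = (- RtoC 1)%C.
Proof. unfold RtoC, Copp; simpl. f_equal; ring. Qed.

Definition mid (a b : C) : C := seg a b (1/2).

Lemma mid_in (a b : C) : Cmod a < 1 -> Cmod b < 1 -> Cmod (mid a b) < 1.
Proof. intros. apply seg_in; auto; lra. Qed.

Lemma SI_split (g : C -> C) (a b : C) : contD g -> Cmod a < 1 -> Cmod b < 1 ->
  SI g a b = (SI g a (mid a b) + SI g (mid a b) b)%C.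
Proof.
  intros Hg Ha Hb.
  set (F := fun s => (g (seg a b s) * (b - a))%C).
  assert (HF : @ex_RInt C_R_NormedModule F 0 1) by (apply ex_RInt_seg; auto).
  assert (HF1 : @ex_RInt C_R_NormedModule F 0 (1/2)).
  { apply (@ex_RInt_Chasles_1 C_R_CompleteNormedModule) with 1; auto; lra. }
  assert (HF2 : @ex_RInt C_R_NormedModule F (1/2) 1).
  { apply (@ex_RInt_Chasles_2 C_R_CompleteNormedModule) with 0; auto; lra. }
  unfold SI at 1. fold F.
  rewrite <- (@RInt_Chasles C_R_CompleteNormedModule F 0 (1/2) 1 HF1 HF2).
  rewrite plus_CR. f_equal.
  - unfold SI. symmetry.
    transitivity (@RInt C_R_CompleteNormedModule (fun y => scal (1/2) (F ((1/2) * y + 0))) 0 1).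
    2:{ rewrite (@RInt_comp_lin C_R_CompleteNormedModule).
        - replace (1/2 * 0 + 0) with 0 by ring. replace (1/2 * 1 + 0) with (1/2) by ring. reflexivity.
        - replace (1/2 * 0 + 0) with 0 by ring. replace (1/2 * 1 + 0) with (1/2) by ring. exact HF1. }
    apply (@RInt_ext C_R_CompleteNormedModule). intros x _. rewrite scal_CR. unfold F.
    replace (seg a (mid a b) x) with (seg a b (1/2 * x + 0)).
    2:{ unfold mid, seg. rewrite !RC_plus, !RC_mult. ring. }
    replace (mid a b - a)%C with (RtoC (1/2) * (b - a))%C.
    2:{ unfold mid, seg. ring. }
    Cring.
  - unfold SI. symmetry.
    transitivity (@RInt C_R_CompleteNormedModule (fun y => scal (1/2) (F ((1/2) * y + 1/2))) 0 1).
    2:{ rewrite (@RInt_comp_lin C_R_CompleteNormedModule).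
        - replace (1/2 * 0 + 1/2) with (1/2) by ring. replace (1/2 * 1 + 1/2) with 1 by field. reflexivity.
        - replace (1/2 * 0 + 1/2) with (1/2) by ring. replace (1/2 * 1 + 1/2) with 1 by field. exact HF2. }
    apply (@RInt_ext C_R_CompleteNormedModule). intros x _. rewrite scal_CR. unfold F.
    replace (seg (mid a b) b x) with (seg a b (1/2 * x + 1/2)).
    2:{ unfold mid, seg. rewrite !RC_plus, !RC_mult, RC_half. field; exact C2_neq0. }
    replace (b - mid a b)%C with (RtoC (1/2) * (b - a))%C.
    2:{ unfold mid, seg. rewrite RC_half. field; exact C2_neq0. }
    Cring.
Qed.

Lemma SI_rev (g : C -> C) (a b : C) : contD g -> Cmod a < 1 -> Cmod b < 1 ->
  SI g b a = (- SI g a b)%C.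
Proof.
  intros Hg Ha Hb.
  set (F := fun s => (g (seg a b s) * (b - a))%C).
  assert (HF : @ex_RInt C_R_NormedModule F 0 1) by (apply ex_RInt_seg; auto).
  unfold SI at 2. fold F. rewrite <- opp_CR.
  rewrite (@opp_RInt_swap C_R_CompleteNormedModule) by exact HF.
  unfold SI.
  transitivity (@RInt C_R_CompleteNormedModule (fun y => scal (-1) (F ((-1) * y + 1))) 0 1).
  2:{ rewrite (@RInt_comp_lin C_R_CompleteNormedModule).
      - replace (-1 * 0 + 1) with 1 by ring. replace (-1 * 1 + 1) with 0 by ring. reflexivity.
      - replace (-1 * 0 + 1) with 1 by ring. replace (-1 * 1 + 1) with 0 by ring.
        apply (@ex_RInt_swap C_R_NormedModule). exact HF. }
  apply (@RInt_ext C_R_CompleteNormedModule). intros x _. rewrite scal_CR. unfold F.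
  replace (seg b a x) with (seg a b (-1 * x + 1)).
  2:{ unfold seg. rewrite !RC_plus, !RC_mult, RC_m1. ring. }
  rewrite RC_m1. Cring.
Qed.

Definition aff (al be c w : C) : C := (al + be * (w - c))%C.
Definition prim (al be c w : C) : C := (al * w + RtoC (1/2) * be * (w - c) * (w - c))%C.

Lemma is_RInt_lin (C1 : C) :
  @is_RInt C_R_NormedModule (fun s => scal s C1) 0 1 (scal (1/2) C1).
Proof.
  assert (H := @is_RInt_derive C_R_CompleteNormedModule (fun s => scal (s * s / 2) C1) (fun s => scal s C1) 0 1).
  replace (scal (1/2) C1) with (minus (scal (1 * 1 / 2) C1) (scal (0 * 0 / 2) C1) : C_R_NormedModule).
  - apply H.
    + intros x _. apply (@is_derive_scal_l R_AbsRing C_R_NormedModule).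
      auto_derive; auto. field.
    + intros x _. apply (@continuous_scal_l R_UniformSpace R_AbsRing C_R_NormedModule).
      apply continuous_id.
  - rewrite minus_CR, !scal_CR. replace (0 * 0 / 2) with 0 by field.
    replace (1 * 1 / 2) with (1 / 2) by field.
    unfold RtoC at 2. unfold Cminus, Cplus, Copp, Cmult. destruct C1; simpl. f_equal; ring.
Qed.

Lemma is_RInt_aff (al be c a b : C) :
  @is_RInt C_R_NormedModule (fun s => (aff al be c (seg a b s) * (b - a))%C) 0 1
    (prim al be c b - prim al be c a)%C.
Proof.
  set (C0 := ((al + be * (a - c)) * (b - a))%C).
  set (C1 := (be * (b - a) * (b - a))%C).
  assert (H := @is_RInt_plus C_R_NormedModule (fun _ => C0) (fun s => scal s C1) 0 1 _ _
     (@is_RInt_const C_R_NormedModule 0 1 C0) (is_RInt_lin C1)).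
  eapply (@is_RInt_ext C_R_NormedModule) in H.
  - replace (prim al be c b - prim al be c a)%C with (plus (scal (1 - 0) C0) (scal (1/2) C1) : C_R_NormedModule).
    + exact H.
    + rewrite plus_CR, !scal_CR. unfold C0, C1, prim. replace (1 - 0) with 1 by ring.
      rewrite RC_half. match goal with |- ?x = ?y => change (@eq C x y) end.
      replace (RtoC 1) with (RtoC 2 * / RtoC 2)%C by (field; exact C2_neq0).
      field; exact C2_neq0.
  - intros x _. simpl. rewrite plus_CR, scal_CR. unfold C0, C1, aff, seg.
    match goal with |- ?x = ?y => change (@eq C x y) end. ring.
Qed.

Lemma SI_aff_bound (g : C -> C) (a b al be c : C) (K : R) :
  contD g -> Cmod a < 1 -> Cmod b < 1 ->
  (forall s, 0 <= s <= 1 -> Cmod (g (seg a b s) - aff al be c (seg a b s)) <= K) ->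
  Cmod (SI g a b - (prim al be c b - prim al be c a)) <= K * Cmod (b - a).
Proof.
  intros Hg Ha Hb HK.
  assert (H := @is_RInt_minus C_R_NormedModule _ _ 0 1 _ _ (is_RInt_SI g a b Hg Ha Hb) (is_RInt_aff al be c a b)).
  assert (Hc := @is_RInt_const R_NormedModule 0 1 (K * Cmod (b - a))).
  assert (Hbd : forall x, 0 <= x <= 1 -> Cmod ((g (seg a b x) * (b - a)) - (aff al be c (seg a b x) * (b - a)))%C <= K * Cmod (b - a)).
  { intros x Hx.
    replace ((g (seg a b x) * (b - a)) - (aff al be c (seg a b x) * (b - a)))%C
      with ((g (seg a b x) - aff al be c (seg a b x)) * (b - a))%C by ring.
    rewrite Cmod_mult. apply Rmult_le_compat_r. apply Cmod_ge_0. apply HK; auto. }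
  assert (L := @norm_RInt_le C_R_NormedModule _ (fun _ => K * Cmod (b - a)) 0 1 _ _ Rle_0_1
     (fun x Hx => ltac:(rewrite normCR; exact (Hbd x Hx))) H Hc).
  eapply Rle_trans; [right; rewrite <- normCR; reflexivity|].
  eapply Rle_trans. apply L.
  right. unfold scal; simpl. unfold mult; simpl. ring.
Qed.

Lemma SI_bound (g : C -> C) (a b : C) (K : R) :
  contD g -> Cmod a < 1 -> Cmod b < 1 ->
  (forall s, 0 <= s <= 1 -> Cmod (g (seg a b s)) <= K) ->
  Cmod (SI g a b) <= K * Cmod (b - a).
Proof.
  intros Hg Ha Hb HK.
  assert (H := SI_aff_bound g a b 0 0 0 K Hg Ha Hb).
  replace (SI g a b) with (SI g a b - (prim 0 0 0 b - prim 0 0 0 a))%C.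
  - apply H. intros s Hs. unfold aff.
    replace (g (seg a b s) - (0 + 0 * (seg a b s - 0)))%C with (g (seg a b s)) by ring. auto.
  - unfold prim. ring.
Qed.

Record tri := mkTri { ta : C; tb : C; tc : C }.

Definition TI (g : C -> C) (t : tri) : C :=
  (SI g (ta t) (tb t) + SI g (tb t) (tc t) + SI g (tc t) (ta t))%C.

Definition per (t : tri) : R := Cmod (tb t - ta t) + Cmod (tc t - tb t) + Cmod (ta t - tc t).

Definition inB (R0 : R) (t : tri) : Prop := Cmod (ta t) <= R0 /\ Cmod (tb t) <= R0 /\ Cmod (tc t) <= R0.

Definition sub1 (t : tri) := mkTri (ta t) (mid (ta t) (tb t)) (mid (tc t) (ta t)).
Definition sub2 (t : tri) := mkTri (mid (ta t) (tb t)) (tb t) (mid (tb t) (tc t)).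
Definition sub3 (t : tri) := mkTri (mid (tc t) (ta t)) (mid (tb t) (tc t)) (tc t).
Definition sub4 (t : tri) := mkTri (mid (ta t) (tb t)) (mid (tb t) (tc t)) (mid (tc t) (ta t)).

Lemma TI_sub (g : C -> C) (t : tri) (R0 : R) : contD g -> R0 < 1 -> inB R0 t ->
  TI g t = (TI g (sub1 t) + TI g (sub2 t) + TI g (sub3 t) + TI g (sub4 t))%C.
Proof.
  intros Hg HR [Ha [Hb Hc]]. destruct t as [a b c]; simpl in *.
  unfold TI, sub1, sub2, sub3, sub4; simpl.
  assert (a1 : Cmod a < 1) by lra. assert (b1 : Cmod b < 1) by lra. assert (c1 : Cmod c < 1) by lra.
  assert (mab := mid_in a b a1 b1). assert (mbc := mid_in b c b1 c1). assert (mca := mid_in c a c1 a1).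
  rewrite (SI_split g a b), (SI_split g b c), (SI_split g c a) by auto.
  rewrite (SI_rev g (mid a b) (mid c a)), (SI_rev g (mid b c) (mid a b)), (SI_rev g (mid c a) (mid b c)) by auto.
  ring.
Qed.

Lemma mid_bound (a b : C) (R0 : R) : Cmod a <= R0 -> Cmod b <= R0 -> Cmod (mid a b) <= R0.
Proof.
  intros. unfold mid. eapply Rle_trans; [apply seg_bound; lra|]. lra.
Qed.

Lemma Cmod_half (x : C) : Cmod (RtoC (1/2) * x) = Cmod x / 2.
Proof. rewrite Cmod_mult, Cmod_RtoC_nonneg by lra. field. Qed.

Lemma mid_sub_l (a b : C) : (mid a b - a)%C = (RtoC (1/2) * (b - a))%C.
Proof. unfold mid, seg. ring. Qed.
Lemma mid_sub_r (a b : C) : (b - mid a b)%C = (RtoC (1/2) * (b - a))%C.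
Proof. unfold mid, seg. rewrite RC_half. field; exact C2_neq0. Qed.
Lemma mid_mid (a b c : C) : (mid c a - mid a b)%C = (RtoC (1/2) * (c - b))%C.
Proof. unfold mid, seg. rewrite RC_half. field; exact C2_neq0. Qed.

Lemma midE (a b : C) : mid a b = (RtoC (1/2) * (a + b))%C.
Proof. unfold mid, seg. rewrite RC_half. field; exact C2_neq0. Qed.

Lemma half_diff (x y u v : C) : Cmod (x - y) = Cmod (u - v) / 2 -> Cmod (x - y) = Cmod (u - v) / 2.
Proof. auto. Qed.

Ltac hd := rewrite ?midE; rewrite <- Cmod_half; f_equal; rewrite ?RC_half; field; exact C2_neq0.

Lemma per_sub (t : tri) :
  per (sub1 t) = per t / 2 /\ per (sub2 t) = per t / 2 /\
  per (sub3 t) = per t / 2 /\ per (sub4 t) = per t / 2.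
Proof.
  destruct t as [a b c]. unfold per, sub1, sub2, sub3, sub4; simpl.
  assert (E1 : forall x y, Cmod (x - y) = Cmod (y - x)) by (intros; apply Cmod_sub_sym).
  repeat split.
  - replace (Cmod (mid a b - a)) with (Cmod (b - a) / 2) by hd.
    replace (Cmod (mid c a - mid a b)) with (Cmod (c - b) / 2) by hd.
    replace (Cmod (a - mid c a)) with (Cmod (a - c) / 2) by hd. field.
  - replace (Cmod (b - mid a b)) with (Cmod (b - a) / 2) by hd.
    replace (Cmod (mid b c - b)) with (Cmod (c - b) / 2) by hd.
    replace (Cmod (mid a b - mid b c)) with (Cmod (a - c) / 2) by hd. field.
  - replace (Cmod (mid b c - mid c a)) with (Cmod (b - a) / 2) by hd.
    replace (Cmod (c - mid b c)) with (Cmod (c - b) / 2) by hd.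
    replace (Cmod (mid c a - c)) with (Cmod (a - c) / 2) by hd. field.
  - replace (Cmod (mid b c - mid a b)) with (Cmod (c - a) / 2) by hd.
    replace (Cmod (mid c a - mid b c)) with (Cmod (a - b) / 2) by hd.
    replace (Cmod (mid a b - mid c a)) with (Cmod (b - c) / 2) by hd.
    rewrite (E1 c a), (E1 a b), (E1 b c). field.
Qed.

Definition step (g : C -> C) (t : tri) : tri :=
  if Rle_dec (Cmod (TI g t) / 4) (Cmod (TI g (sub1 t))) then sub1 t
  else if Rle_dec (Cmod (TI g t) / 4) (Cmod (TI g (sub2 t))) then sub2 t
  else if Rle_dec (Cmod (TI g t) / 4) (Cmod (TI g (sub3 t))) then sub3 t
  else sub4 t.

Lemma step_cases (g : C -> C) (t : tri) :
  step g t = sub1 t \/ step g t = sub2 t \/ step g t = sub3 t \/ step g t = sub4 t.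
Proof.
  unfold step. destruct Rle_dec; auto. destruct Rle_dec; auto. destruct Rle_dec; auto.
Qed.

Lemma step_TI (g : C -> C) (t : tri) (R0 : R) : contD g -> R0 < 1 -> inB R0 t ->
  Cmod (TI g t) <= 4 * Cmod (TI g (step g t)).
Proof.
  intros Hg HR Hin. unfold step.
  destruct Rle_dec as [H1|H1]; [lra|].
  destruct Rle_dec as [H2|H2]; [lra|].
  destruct Rle_dec as [H3|H3]; [lra|].
  apply Rnot_le_lt in H1, H2, H3.
  destruct (Rle_dec (Cmod (TI g t) / 4) (Cmod (TI g (sub4 t)))) as [H4|H4]; [lra|].
  apply Rnot_le_lt in H4. exfalso.
  assert (E := TI_sub g t R0 Hg HR Hin).
  assert (Cmod (TI g t) <= Cmod (TI g (sub1 t)) + Cmod (TI g (sub2 t)) + Cmod (TI g (sub3 t)) + Cmod (TI g (sub4 t))).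
  { rewrite E. eapply Rle_trans; [apply Cmod_triangle|].
    apply Rplus_le_compat_r. eapply Rle_trans; [apply Cmod_triangle|].
    apply Rplus_le_compat_r. apply Cmod_triangle. }
  lra.
Qed.

Lemma sub_inB (t : tri) (R0 : R) : inB R0 t ->
  inB R0 (sub1 t) /\ inB R0 (sub2 t) /\ inB R0 (sub3 t) /\ inB R0 (sub4 t).
Proof.
  intros [Ha [Hb Hc]]. destruct t as [a b c]; simpl in *.
  unfold inB, sub1, sub2, sub3, sub4; simpl.
  repeat split; auto; apply mid_bound; auto.
Qed.

Lemma step_inB (g : C -> C) (t : tri) (R0 : R) : inB R0 t -> inB R0 (step g t).
Proof.
  intros H. destruct (sub_inB t R0 H) as [H1 [H2 [H3 H4]]].
  destruct (step_cases g t) as [E|[E|[E|E]]]; rewrite E; auto.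
Qed.

Lemma step_per (g : C -> C) (t : tri) : per (step g t) = per t / 2.
Proof.
  destruct (per_sub t) as [H1 [H2 [H3 H4]]].
  destruct (step_cases g t) as [E|[E|[E|E]]]; rewrite E; auto.
Qed.

Lemma per_ge (t : tri) : Cmod (tb t - ta t) <= per t /\ Cmod (tc t - tb t) <= per t /\ Cmod (ta t - tc t) <= per t.
Proof.
  unfold per. assert (H1 := Cmod_ge_0 (tb t - ta t)). assert (H2 := Cmod_ge_0 (tc t - tb t)).
  assert (H3 := Cmod_ge_0 (ta t - tc t)). lra.
Qed.

Lemma step_ta (g : C -> C) (t : tri) : Cmod (ta (step g t) - ta t) <= per t.
Proof.
  destruct (per_ge t) as [H1 [H2 H3]].
  destruct t as [a b c]; simpl in *.
  assert (Hab : Cmod (mid a b - a) <= per (mkTri a b c)).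
  { rewrite mid_sub_l, Cmod_half. assert (H0 := Cmod_ge_0 (b - a)). lra. }
  assert (Hca : Cmod (mid c a - a) <= per (mkTri a b c)).
  { rewrite Cmod_sub_sym, mid_sub_r, Cmod_half. assert (H0 := Cmod_ge_0 (a - c)). lra. }
  assert (Haa : Cmod (a - a) <= per (mkTri a b c)).
  { replace (a - a)%C with (RtoC 0) by ring. rewrite Cmod_0.
    assert (H0 := Cmod_ge_0 (b - a)). lra. }
  destruct (step_cases g (mkTri a b c)) as [E|[E|[E|E]]]; rewrite E; simpl; auto.
Qed.

Lemma boundary_near (t : tri) (s : R) : 0 <= s <= 1 ->
  Cmod (seg (ta t) (tb t) s - ta t) <= per t /\
  Cmod (seg (tb t) (tc t) s - ta t) <= per t /\
  Cmod (seg (tc t) (ta t) s - ta t) <= per t.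
Proof.
  intros Hs. destruct (per_ge t) as [H1 [H2 H3]]. unfold per in *.
  destruct t as [a b c]; simpl in *. unfold seg.
  assert (P1 := Cmod_ge_0 (b - a)). assert (P2 := Cmod_ge_0 (c - b)). assert (P3 := Cmod_ge_0 (a - c)).
  repeat split.
  - replace (a + RtoC s * (b - a) - a)%C with (RtoC s * (b - a))%C by ring.
    rewrite Cmod_mult, Cmod_RtoC_nonneg by lra. nra.
  - replace (b + RtoC s * (c - b) - a)%C with ((b - a) + RtoC s * (c - b))%C by ring.
    eapply Rle_trans; [apply Cmod_triangle|]. rewrite Cmod_mult, Cmod_RtoC_nonneg by lra. nra.
  - replace (c + RtoC s * (a - c) - a)%C with (RtoC (1 - s) * (c - a))%C by (rewrite RC_minus; ring).
    rewrite Cmod_mult, Cmod_RtoC_nonneg by lra. rewrite Cmod_sub_sym. nra.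
Qed.

Lemma fst_le_Cmod (x : C) : Rabs (fst x) <= Cmod x.
Proof. apply re_le_Cmod. Qed.

Lemma snd_le_Cmod (x : C) : Rabs (snd x) <= Cmod x.
Proof.
  destruct x as [u v]; unfold Cmod; simpl.
  rewrite <- (sqrt_Rsqr_abs v). apply sqrt_le_1_alt. unfold Rsqr. nra.
Qed.

Lemma Cmod_le_sum (x : C) : Cmod x <= Rabs (fst x) + Rabs (snd x).
Proof.
  destruct x as [u v]; unfold Cmod; simpl.
  rewrite <- (sqrt_square (Rabs u + Rabs v)) by (assert (H1 := Rabs_pos u); assert (H2 := Rabs_pos v); lra).
  apply sqrt_le_1_alt.
  assert (H1 := Rabs_pos u); assert (H2 := Rabs_pos v).
  assert (E1 : u * (u * 1) = Rabs u * Rabs u) by (rewrite <- Rabs_mult, Rmult_1_r; symmetry; apply Rabs_right; nra).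
  assert (E2 : v * (v * 1) = Rabs v * Rabs v) by (rewrite <- Rabs_mult, Rmult_1_r; symmetry; apply Rabs_right; nra).
  simpl. rewrite E1, E2. nra.
Qed.

Fixpoint iter_tri (g : C -> C) (t : tri) (n : nat) : tri :=
  match n with O => t | S k => step g (iter_tri g t k) end.

Lemma iter_inB (g : C -> C) (t0 : tri) (R0 : R) (Hin : inB R0 t0) n : inB R0 (iter_tri g t0 n).
Proof. induction n; simpl; auto. apply step_inB; auto. Qed.

Lemma iter_per (g : C -> C) (t0 : tri) n : per (iter_tri g t0 n) = per t0 / 2 ^ n.
Proof.
  induction n; simpl. field. rewrite step_per, IHn. field. apply pow_nonzero. lra.
Qed.

Lemma iter_TI (g : C -> C) (t0 : tri) (R0 : R) (Hg : contD g) (HR : R0 < 1) (Hin : inB R0 t0) n :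
  Cmod (TI g t0) <= 4 ^ n * Cmod (TI g (iter_tri g t0 n)).
Proof.
  induction n; simpl. lra.
  eapply Rle_trans; [apply IHn|].
  replace (4 * 4 ^ n * Cmod (TI g (step g (iter_tri g t0 n)))) with
    (4 ^ n * (4 * Cmod (TI g (step g (iter_tri g t0 n))))) by ring.
  apply Rmult_le_compat_l.
  apply pow_le; lra. apply step_TI with R0; auto. apply iter_inB; auto.
Qed.

Lemma iter_ta (g : C -> C) (t0 : tri) n k : Cmod (ta (iter_tri g t0 (n + k)) - ta (iter_tri g t0 n)) <=
  2 * per (iter_tri g t0 n) - 2 * per (iter_tri g t0 (n + k)).
Proof.
  induction k.
  - rewrite Nat.add_0_r. replace (ta (iter_tri g t0 n) - ta (iter_tri g t0 n))%C with (RtoC 0) by ring.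
    rewrite Cmod_0. lra.
  - rewrite Nat.add_succ_r. simpl.
    eapply Rle_trans; [apply (Cmod_tri_sub _ (ta (iter_tri g t0 (n + k))))|].
    assert (H := step_ta g (iter_tri g t0 (n + k))).
    rewrite step_per. lra.
Qed.

Lemma INR_le_pow2 n : INR n <= 2 ^ n.
Proof.
  induction n. simpl; lra. rewrite S_INR. simpl.
  assert (1 <= 2 ^ n) by (apply pow_R1_Rle; lra). lra.
Qed.

Lemma small_geom (c eps : R) : 0 <= c -> 0 < eps -> exists N, forall n, (N <= n)%nat -> c / 2 ^ n < eps.
Proof.
  intros Hc He. destruct (archimed_cor1 (eps / (c + 1))) as [N [HN HN0]].
  { apply Rdiv_lt_0_compat; lra. }
  exists N. intros n Hn.
  assert (HN1 : 0 < INR N) by (apply lt_0_INR; lia).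
  assert (H2 : INR N <= 2 ^ n).
  { eapply Rle_trans; [apply le_INR; exact Hn| apply INR_le_pow2]. }
  assert (H3 : 0 < 2 ^ n) by (apply pow_lt; lra).
  apply Rle_lt_trans with ((c + 1) / INR N).
  - unfold Rdiv. apply Rmult_le_compat; try lra.
    + apply Rlt_le, Rinv_0_lt_compat; lra.
    + apply Rinv_le_contravar; lra.
  - apply (Rmult_lt_compat_l (c + 1)) in HN; [|lra].
    replace ((c + 1) * (eps / (c + 1))) with eps in HN by (field; lra). unfold Rdiv. lra.
Qed.

Lemma limit_point (u : nat -> C) (c : R) : 0 <= c ->
  (forall n k, Cmod (u (n + k)%nat - u n) <= c / 2 ^ n) ->
  exists z, forall n, Cmod (z - u n) <= c / 2 ^ n.
Proof.
  intros Hc Hu.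
  assert (Hnm : forall N n m, (N <= n)%nat -> (N <= m)%nat -> Cmod (u n - u m) <= 2 * (c / 2 ^ N)).
  { intros N n m Hn Hm.
    replace n with (N + (n - N))%nat by lia. replace m with (N + (m - N))%nat by lia.
    eapply Rle_trans; [apply (Cmod_tri_sub _ (u N))|].
    rewrite (Cmod_sub_sym (u N)). assert (H1 := Hu N (n - N)%nat). assert (H2 := Hu N (m - N)%nat). lra. }
  assert (Cx : Cauchy_crit (fun n => fst (u n))).
  { intros eps He. destruct (small_geom c (eps / 4) Hc) as [N HN]. lra.
    exists N. intros n m Hn Hm. unfold Rdist.
    assert (H := Hnm N n m Hn Hm). assert (H' := HN N (le_n N)).
    replace (fst (u n) - fst (u m)) with (fst (u n - u m)%C) by (simpl; ring).
    eapply Rle_lt_trans; [apply fst_le_Cmod|]. lra. }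
  assert (Cy : Cauchy_crit (fun n => snd (u n))).
  { intros eps He. destruct (small_geom c (eps / 4) Hc) as [N HN]. lra.
    exists N. intros n m Hn Hm. unfold Rdist.
    assert (H := Hnm N n m Hn Hm). assert (H' := HN N (le_n N)).
    replace (snd (u n) - snd (u m)) with (snd (u n - u m)%C) by (simpl; ring).
    eapply Rle_lt_trans; [apply snd_le_Cmod|]. lra. }
  destruct (Rcomplete.R_complete _ Cx) as [lx Hx].
  destruct (Rcomplete.R_complete _ Cy) as [ly Hy].
  exists (lx, ly). intros n. apply Rle_plus_epsilon. intros eps He.
  destruct (Hx (eps / 2)) as [N1 H1]. lra.
  destruct (Hy (eps / 2)) as [N2 H2]. lra.
  set (m := (n + N1 + N2)%nat).
  specialize (H1 m ltac:(unfold m; lia)). specialize (H2 m ltac:(unfold m; lia)).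
  unfold Rdist in H1, H2.
  eapply Rle_trans; [apply (Cmod_tri_sub _ (u m))|].
  assert (Hm := Hu n (N1 + N2)%nat). replace (n + (N1 + N2))%nat with m in Hm by (unfold m; lia).
  assert (Hz : Cmod ((lx, ly) - u m) <= Rabs (fst (u m) - lx) + Rabs (snd (u m) - ly)).
  { eapply Rle_trans; [apply Cmod_le_sum|]. simpl.
    rewrite <- (Rabs_minus_sym lx), <- (Rabs_minus_sym ly). right. reflexivity. }
  lra.
Qed.

Lemma edge_est (g : C -> C) (z l : C) (eta d : R) (u v : C) (an : C) (pn : R) :
  contD g -> Cmod u < 1 -> Cmod v < 1 ->
  (forall w, Cmod (w - z) < d -> Cmod (g w - g z - l * (w - z)) <= eta * Cmod (w - z)) ->
  0 <= eta -> Cmod (z - an) <= 2 * pn -> 3 * pn < d ->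
  (forall s, 0 <= s <= 1 -> Cmod (seg u v s - an) <= pn) ->
  Cmod (SI g u v - (prim (g z) l z v - prim (g z) l z u)) <= (3 * eta * pn) * Cmod (v - u).
Proof.
  intros Hg Hu Hv Hd Heta Hz Hpd Hs.
  apply SI_aff_bound; auto.
  intros s Hs01. unfold aff.
  assert (Hw : Cmod (seg u v s - z) <= 3 * pn).
  { eapply Rle_trans; [apply (Cmod_tri_sub _ an)|]. rewrite (Cmod_sub_sym an z).
    specialize (Hs s Hs01). lra. }
  replace (g (seg u v s) - (g z + l * (seg u v s - z)))%C with
    (g (seg u v s) - g z - l * (seg u v s - z))%C by ring.
  eapply Rle_trans; [apply Hd; lra|].
  replace (3 * eta * pn) with (eta * (3 * pn)) by ring.
  apply Rmult_le_compat_l; auto.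
Qed.

Theorem goursat (g : C -> C) (a b c : C) :
  holomorphic_on_disc g -> Cmod a < 1 -> Cmod b < 1 -> Cmod c < 1 ->
  TI g (mkTri a b c) = 0%C.
Proof.
  intros Hh Ha Hb Hc.
  assert (Hg := contD_of_hol g Hh).
  set (t0 := mkTri a b c).
  set (R0 := Rmax (Cmod a) (Rmax (Cmod b) (Cmod c))).
  assert (HR : R0 < 1) by (unfold R0; repeat apply Rmax_lub_lt; auto).
  assert (Hin : inB R0 t0).
  { unfold inB, t0, R0; simpl. repeat split.
    - apply Rmax_l.
    - eapply Rle_trans; [apply Rmax_l| apply Rmax_r].
    - eapply Rle_trans; [apply Rmax_r| apply Rmax_r]. }
  set (p0 := per t0).
  assert (Hp0 : 0 <= p0).
  { unfold p0, per. assert (H1 := Cmod_ge_0 (tb t0 - ta t0)). assert (H2 := Cmod_ge_0 (tc t0 - tb t0)).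
    assert (H3 := Cmod_ge_0 (ta t0 - tc t0)). lra. }
  set (u := fun n => ta (iter_tri g t0 n)).
  assert (Hpn : forall n, per (iter_tri g t0 n) = p0 / 2 ^ n) by (intros; apply iter_per).
  assert (Hpos : forall n, 0 < 2 ^ n) by (intros; apply pow_lt; lra).
  assert (Hu : forall n k, Cmod (u (n + k)%nat - u n) <= (2 * p0) / 2 ^ n).
  { intros n k. unfold u. eapply Rle_trans; [apply iter_ta|].
    rewrite !Hpn. assert (0 <= p0 / 2 ^ (n + k)) by (apply Rdiv_le_0_compat; auto).
    replace (2 * p0 / 2 ^ n) with (2 * (p0 / 2 ^ n)) by (field; apply Rgt_not_eq, Hpos). lra. }
  destruct (limit_point u (2 * p0) ltac:(lra) Hu) as [z Hz].
  assert (HzR : Cmod z <= R0).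
  { apply Rle_plus_epsilon. intros eps He.
    destruct (small_geom (2 * p0) eps ltac:(lra) He) as [N HN].
    specialize (HN N (le_n N)). specialize (Hz N).
    replace z with ((z - u N) + u N)%C by ring.
    eapply Rle_trans; [apply Cmod_triangle|].
    destruct (iter_inB g t0 R0 Hin N) as [H1 _]. unfold u in *. lra. }
  assert (Hz1 : Cmod z < 1) by lra.
  destruct (Hh z Hz1) as [l Hl].
  assert (Hmain : Cmod (TI g t0) <= 0).
  { apply Rle_plus_epsilon. intros eps He.
    set (eta := eps / (3 * p0 ^ 2 + 1)).
    assert (Heta : 0 < eta) by (unfold eta; apply Rdiv_lt_0_compat; nra).
    destruct (eps_of_derive g z l Hl eta Heta) as [d [Hd Hdw]].
    destruct (small_geom p0 (d / 3) Hp0 ltac:(lra)) as [n Hn].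
    specialize (Hn n (le_n n)).
    set (tn := iter_tri g t0 n).
    assert (Hinn : inB R0 tn) by (apply iter_inB; auto).
    destruct Hinn as [Ha' [Hb' Hc']].
    assert (Hzn : Cmod (z - ta tn) <= 2 * (p0 / 2 ^ n)).
    { specialize (Hz n). unfold u in Hz. fold tn in Hz. unfold Rdiv in *. lra. }
    assert (Hpn' : per tn = p0 / 2 ^ n) by apply Hpn.
    set (pn := p0 / 2 ^ n) in *.
    assert (Hpd : 3 * pn < d) by lra.
    set (P := prim (g z) l z).
    assert (E1 := edge_est g z l eta d (ta tn) (tb tn) (ta tn) pn Hg ltac:(lra) ltac:(lra) Hdw ltac:(lra) Hzn Hpd
                    (fun s Hs => eq_ind _ (fun r => _ <= r) (proj1 (boundary_near tn s Hs)) _ Hpn')).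
    assert (E2 := edge_est g z l eta d (tb tn) (tc tn) (ta tn) pn Hg ltac:(lra) ltac:(lra) Hdw ltac:(lra) Hzn Hpd
                    (fun s Hs => eq_ind _ (fun r => _ <= r) (proj1 (proj2 (boundary_near tn s Hs))) _ Hpn')).
    assert (E3 := edge_est g z l eta d (tc tn) (ta tn) (ta tn) pn Hg ltac:(lra) ltac:(lra) Hdw ltac:(lra) Hzn Hpd
                    (fun s Hs => eq_ind _ (fun r => _ <= r) (proj2 (proj2 (boundary_near tn s Hs))) _ Hpn')).
    assert (HT : Cmod (TI g tn) <= 3 * eta * pn * per tn).
    { unfold TI.
      replace (SI g (ta tn) (tb tn) + SI g (tb tn) (tc tn) + SI g (tc tn) (ta tn))%C with
        ((SI g (ta tn) (tb tn) - (P (tb tn) - P (ta tn))) + (SI g (tb tn) (tc tn) - (P (tc tn) - P (tb tn)))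
         + (SI g (tc tn) (ta tn) - (P (ta tn) - P (tc tn))))%C by ring.
      eapply Rle_trans; [apply Cmod_triangle|].
      eapply Rle_trans; [apply Rplus_le_compat_r; apply Cmod_triangle|].
      unfold per, P. lra. }
    assert (H4 := iter_TI g t0 R0 Hg HR Hin n). fold tn in H4.
    assert (Hpn0 : 0 <= pn) by (unfold pn; apply Rdiv_le_0_compat; auto; apply Rlt_le; auto).
    assert (E4 : 4 ^ n * (pn * pn) = p0 ^ 2).
    { unfold pn. replace 4 with (2 * 2) by ring. rewrite Rpow_mult_distr. field.
      apply pow_nonzero; lra. }
    assert (H5 : Cmod (TI g t0) <= 3 * eta * p0 ^ 2).
    { eapply Rle_trans; [apply H4|]. rewrite Hpn' in HT. fold pn in HT.
      rewrite <- E4. assert (H4pos : 0 < 4 ^ n) by (apply pow_lt; lra).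
      apply Rmult_le_compat_l with (r := 4 ^ n) in HT; [|lra]. nra. }
    eapply Rle_trans; [apply H5|].
    unfold eta. assert (0 <= p0 ^ 2) by nra.
    apply Rle_trans with (eps * (3 * p0 ^ 2 / (3 * p0 ^ 2 + 1))).
    - right. field. nra.
    - assert (3 * p0 ^ 2 / (3 * p0 ^ 2 + 1) <= 1).
      { apply Rmult_le_reg_r with (3 * p0 ^ 2 + 1). nra. unfold Rdiv. rewrite Rmult_assoc, Rinv_l; nra. }
      nra. }
  apply Cmod_eq_0. assert (H0 := Cmod_ge_0 (TI g t0)). fold t0. lra.
Qed.

Lemma toA (f : C -> C) z l : is_derive (K := C_AbsRing) (V := C_NormedModule) f z l ->
  is_derive (K := C_AbsRing) (V := AbsRing_NormedModule C_AbsRing) f z l.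
Proof. intros [_ H]. split. apply (@is_linear_scal_l C_AbsRing (AbsRing_NormedModule C_AbsRing)).
  intros x Hx eps. exact (H x Hx eps). Qed.
Lemma fromA (f : C -> C) z l : is_derive (K := C_AbsRing) (V := AbsRing_NormedModule C_AbsRing) f z l ->
  is_derive (K := C_AbsRing) (V := C_NormedModule) f z l.
Proof. intros [_ H]. split. apply (@is_linear_scal_l C_AbsRing C_NormedModule).
  intros x Hx eps. exact (H x Hx eps). Qed.

Lemma derive_mult (f g : C -> C) z df dg :
  is_derive (K := C_AbsRing) (V := C_NormedModule) f z df ->
  is_derive (K := C_AbsRing) (V := C_NormedModule) g z dg ->
  is_derive (K := C_AbsRing) (V := C_NormedModule) (fun w => Cmult (f w) (g w)) z (df * g z + f z * dg)%C.
Proof.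
  intros H1 H2. apply fromA. exact (@is_derive_mult C_AbsRing f g z df dg (toA _ _ _ H1) (toA _ _ _ H2) Cmult_comm).
Qed.

Lemma derive_comp (f g : C -> C) z df dg :
  is_derive (K := C_AbsRing) (V := C_NormedModule) f (g z) df ->
  is_derive (K := C_AbsRing) (V := C_NormedModule) g z dg ->
  is_derive (K := C_AbsRing) (V := C_NormedModule) (fun w => f (g w)) z (dg * df)%C.
Proof.
  intros. exact (@is_derive_comp C_AbsRing C_NormedModule f g z df dg H (toA _ _ _ H0)).
Qed.

Lemma Cmod_lower (w z : C) : Cmod z - Cmod (w - z) <= Cmod w.
Proof.
  assert (H := Cmod_triangle w (z - w)%C).
  replace (w + (z - w))%C with z in H by ring. rewrite Cmod_sub_sym in H. lra.
Qed.

Lemma derive_inv (z : C) : z <> 0%C ->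
  is_derive (K := C_AbsRing) (V := C_NormedModule) Cinv z (- / (z * z))%C.
Proof.
  intros Hz. apply derive_of_eps. intros eps He.
  assert (Hm : 0 < Cmod z) by (apply Cmod_gt_0; auto).
  exists (Rmin (Cmod z / 2) (eps * (Cmod z * Cmod z * Cmod z) / 2)). split.
  { apply Rmin_pos. lra. apply Rdiv_lt_0_compat; [|lra]. apply Rmult_lt_0_compat; auto.
    repeat apply Rmult_lt_0_compat; auto. }
  intros w Hw.
  assert (H1 : Cmod (w - z) < Cmod z / 2) by (eapply Rlt_le_trans; [exact Hw| apply Rmin_l]).
  assert (H2 : Cmod (w - z) < eps * (Cmod z * Cmod z * Cmod z) / 2) by (eapply Rlt_le_trans; [exact Hw| apply Rmin_r]).
  assert (Hw2 : Cmod z / 2 < Cmod w) by (assert (H := Cmod_lower w z); lra).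
  assert (Hw0 : w <> 0%C) by (apply Cmod_gt_0; lra).
  replace (/ w - / z - - / (z * z) * (w - z))%C with ((w - z) * (w - z) * / (w * (z * z)))%C.
  2:{ field. auto. }
  rewrite !Cmod_mult, Cmod_inv, !Cmod_mult.
  2:{ apply Cmod_gt_0. rewrite !Cmod_mult. apply Rmult_lt_0_compat; [lra| apply Rmult_lt_0_compat; lra]. }
  assert (P := Cmod_ge_0 (w - z)).
  set (d := Cmod (w - z)) in *. set (m := Cmod z) in *. set (n := Cmod w) in *.
  assert (Hm3 : 0 < m * m * m) by (repeat apply Rmult_lt_0_compat; lra).
  assert (Hinv : / (n * (m * m)) <= 2 / (m * m * m)).
  { replace (2 / (m * m * m)) with (/ (m / 2 * (m * m))) by (field; lra).
    apply Rinv_le_contravar. apply Rmult_lt_0_compat; [lra| apply Rmult_lt_0_compat; lra].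
    apply Rmult_le_compat_r; [apply Rlt_le, Rmult_lt_0_compat; lra| lra]. }
  assert (Hd2 : d * (2 / (m * m * m)) <= eps).
  { apply (Rmult_le_reg_r (m * m * m)); auto. unfold Rdiv.
    replace (d * (2 * / (m * m * m)) * (m * m * m)) with (2 * d) by (field; lra). unfold Rdiv in H2. lra. }
  assert (Hi0 : 0 <= / (n * (m * m))) by (apply Rlt_le, Rinv_0_lt_compat, Rmult_lt_0_compat; [lra| apply Rmult_lt_0_compat; lra]).
  apply Rle_trans with (d * (d * (2 / (m * m * m)))).
  { rewrite Rmult_assoc. apply Rmult_le_compat_l; auto. apply Rmult_le_compat_l; auto. }
  rewrite Rmult_comm. apply Rmult_le_compat_r; auto.
Qed.

Definition gt (f : C -> C) (t : R) (w : C) : C :=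
  Cdiv (f w) (Cminus (RtoC 1) (Cmult (RtoC t) w)).

Lemma den_bound (t : R) (w : C) : 0 <= t -> 1 - t * Cmod w <= Cmod (RtoC 1 - RtoC t * w)%C.
Proof.
  intros Ht. assert (H := Cmod_lower (RtoC 1 - RtoC t * w)%C (RtoC 1)).
  replace (RtoC 1 - RtoC t * w - RtoC 1)%C with (- (RtoC t * w))%C in H by ring.
  rewrite Cmod_opp, Cmod_mult, (Cmod_RtoC_nonneg t) in H by auto.
  rewrite (Cmod_RtoC_nonneg 1) in H by lra. lra.
Qed.

Lemma den_nz (t : R) (w : C) : 0 <= t <= 1 -> Cmod w < 1 -> (RtoC 1 - RtoC t * w)%C <> 0%C.
Proof.
  intros Ht Hw. apply Cmod_gt_0. eapply Rlt_le_trans; [|apply den_bound; lra].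
  assert (0 <= Cmod w) by apply Cmod_ge_0. nra.
Qed.

Lemma derive_den (t : R) (z : C) :
  is_derive (K := C_AbsRing) (V := C_NormedModule) (fun w => RtoC 1 - RtoC t * w)%C z (- RtoC t)%C.
Proof.
  apply derive_of_eps. intros eps He. exists 1. split; [lra|]. intros w _.
  replace (RtoC 1 - RtoC t * w - (RtoC 1 - RtoC t * z) - - RtoC t * (w - z))%C with (RtoC 0) by ring.
  rewrite Cmod_0. assert (0 <= Cmod (w - z)) by apply Cmod_ge_0. nra.
Qed.

Lemma gt_hol (f : C -> C) (t : R) : holomorphic_on_disc f -> 0 <= t <= 1 -> holomorphic_on_disc (gt f t).
Proof.
  intros Hf Ht z Hz. destruct (Hf z Hz) as [df Hdf].
  assert (Hd := derive_comp Cinv (fun w => RtoC 1 - RtoC t * w)%C z _ _ (derive_inv _ (den_nz t z Ht Hz)) (derive_den t z)).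
  exists (df * / (RtoC 1 - RtoC t * z) + f z * (- RtoC t * - / ((RtoC 1 - RtoC t * z) * (RtoC 1 - RtoC t * z))))%C.
  exact (derive_mult f (fun w => Cinv (RtoC 1 - RtoC t * w))%C z _ _ Hdf Hd).
Qed.

Lemma SI_diff (g : C -> C) (z w : C) : holomorphic_on_disc g -> Cmod z < 1 -> Cmod w < 1 ->
  (SI g 0 w - SI g 0 z)%C = SI g z w.
Proof.
  intros Hh Hz Hw. assert (Hg := contD_of_hol g Hh).
  assert (H0 : Cmod (RtoC 0) < 1) by (rewrite Cmod_0; lra).
  assert (T := goursat g 0 z w Hh H0 Hz Hw). unfold TI in T; simpl in T.
  rewrite (SI_rev g 0 w Hg H0 Hw) in T.
  replace (SI g z w) with ((SI g 0 z + SI g z w + - SI g 0 w) + (SI g 0 w - SI g 0 z))%C by ring.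
  rewrite T. ring.
Qed.

Lemma seg_sub_start (a b : C) (s : R) : 0 <= s <= 1 -> Cmod (seg a b s - a) <= Cmod (b - a).
Proof.
  intros Hs. unfold seg. replace (a + RtoC s * (b - a) - a)%C with (RtoC s * (b - a))%C by ring.
  rewrite Cmod_mult, Cmod_RtoC_nonneg by lra. assert (0 <= Cmod (b - a)) by apply Cmod_ge_0. nra.
Qed.

Lemma G_derive (g : C -> C) (z : C) : holomorphic_on_disc g -> Cmod z < 1 ->
  is_derive (K := C_AbsRing) (V := C_NormedModule) (fun w => SI g 0 w) z (g z).
Proof.
  intros Hh Hz. assert (Hg := contD_of_hol g Hh).
  apply derive_of_eps. intros eps He.
  destruct (Hg z Hz eps He) as [d [Hd Hc]].
  exists (Rmin d (1 - Cmod z)). split. { apply Rmin_pos; lra. }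
  intros w Hw.
  assert (Hw1 : Cmod (w - z) < d) by (eapply Rlt_le_trans; [exact Hw| apply Rmin_l]).
  assert (Hw2 : Cmod (w - z) < 1 - Cmod z) by (eapply Rlt_le_trans; [exact Hw| apply Rmin_r]).
  assert (Hwd : Cmod w < 1).
  { replace w with (z + (w - z))%C by ring. eapply Rle_lt_trans; [apply Cmod_triangle|]. lra. }
  rewrite (SI_diff g z w Hh Hz Hwd).
  replace (SI g z w - g z * (w - z))%C with (SI g z w - (prim (g z) 0 z w - prim (g z) 0 z z))%C
    by (unfold prim; ring).
  apply SI_aff_bound; auto.
  intros s Hs. unfold aff.
  replace (g (seg z w s) - (g z + 0 * (seg z w s - z)))%C with (g (seg z w s) - g z)%C by ring.
  left. apply Hc. eapply Rle_lt_trans; [apply seg_sub_start; auto| exact Hw1].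
Qed.

Lemma cesaro_SI (t : R) (f : C -> C) (z : C) : Cmod z <> 0 ->
  cesaro t f z = (Cinv z * SI (gt f t) 0 z)%C.
Proof.
  intros Hz. unfold cesaro. destruct (Req_EM_T (Cmod z) 0) as [E|E]; [contradiction|].
  f_equal. unfold SI. apply (@RInt_ext C_R_CompleteNormedModule). intros x _.
  unfold gt. replace (seg 0 z x) with (RtoC x * z)%C by (unfold seg; ring).
  match goal with |- ?x = ?y => change (@eq C x y) end. ring.
Qed.

Lemma cesaro_0 (t : R) (f : C -> C) : cesaro t f 0%C = f 0%C.
Proof.
  unfold cesaro. destruct (Req_EM_T (Cmod 0) 0) as [E|E]; auto.
  exfalso. apply E. apply Cmod_0.
Qed.

Lemma gt_0 (f : C -> C) (t : R) : gt f t 0%C = f 0%C.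
Proof.
  unfold gt. replace (RtoC 1 - RtoC t * RtoC 0)%C with (RtoC 1) by ring.
  unfold Cdiv. replace (/ RtoC 1)%C with (RtoC 1). ring.
  unfold Cinv, RtoC; simpl. f_equal; field.
Qed.

Lemma cesaro_derive_nz (t : R) (f : C -> C) (z : C) : holomorphic_on_disc f -> 0 <= t <= 1 ->
  Cmod z < 1 -> Cmod z <> 0 -> ex_derive (K := C_AbsRing) (V := C_NormedModule) (cesaro t f) z.
Proof.
  intros Hf Ht Hz Hz0.
  assert (Hgh := gt_hol f t Hf Ht).
  assert (Hzn : z <> 0%C) by (intros E; apply Hz0; rewrite E; apply Cmod_0).
  assert (Hd := derive_mult Cinv (fun w => SI (gt f t) 0 w) z _ _ (derive_inv z Hzn) (G_derive _ z Hgh Hz)).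
  eexists. eapply (@is_derive_ext_loc C_AbsRing C_NormedModule); [|exact Hd].
  assert (Hp : 0 < Cmod z) by (assert (H := Cmod_ge_0 z); lra).
  exists (mkposreal _ Hp). intros y Hy. simpl.
  assert (Hy' : Cmod (y - z) < Cmod z) by exact Hy.
  assert (Hy0 : Cmod y <> 0) by (assert (H := Cmod_lower y z); lra).
  rewrite cesaro_SI by auto. reflexivity.
Qed.

Lemma cesaro_derive_0 (t : R) (f : C -> C) : holomorphic_on_disc f -> 0 <= t <= 1 ->
  ex_derive (K := C_AbsRing) (V := C_NormedModule) (cesaro t f) (RtoC 0).
Proof.
  intros Hf Ht.
  assert (Hgh := gt_hol f t Hf Ht). assert (Hg := contD_of_hol _ Hgh).
  assert (H01 : Cmod (RtoC 0) < 1) by (rewrite Cmod_0; lra).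
  destruct (Hgh 0%C H01) as [l Hl].
  exists (RtoC (1/2) * l)%C. apply derive_of_eps. intros eps He.
  destruct (eps_of_derive _ _ _ Hl eps He) as [d [Hd Hdw]].
  exists (Rmin d 1). split. { apply Rmin_pos; lra. }
  intros w Hw.
  assert (Hw1 : Cmod (w - 0) < d) by (eapply Rlt_le_trans; [exact Hw| apply Rmin_l]).
  assert (Hw2 : Cmod w < 1).
  { replace w with (w - 0)%C by ring. eapply Rlt_le_trans; [exact Hw| apply Rmin_r]. }
  rewrite cesaro_0.
  destruct (Req_EM_T (Cmod w) 0) as [E|E].
  - apply Cmod_eq_0 in E. subst w. rewrite cesaro_0.
    replace (f 0%C - f 0%C - RtoC (1 / 2) * l * (0 - 0))%C with (RtoC 0) by ring.
    rewrite Cmod_0. assert (0 <= Cmod (0 - 0)%C) by apply Cmod_ge_0. nra.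
  - rewrite cesaro_SI by auto. rewrite <- (gt_0 f t).
    assert (Hwn : w <> 0%C) by (intros E'; apply E; rewrite E'; apply Cmod_0).
    replace (/ w * SI (gt f t) 0 w - gt f t 0 - RtoC (1 / 2) * l * (w - 0))%C with
      (/ w * (SI (gt f t) 0 w - (prim (gt f t 0) l 0 w - prim (gt f t 0) l 0 0)))%C.
    2:{ unfold prim. field. auto. }
    rewrite Cmod_mult, Cmod_inv by auto.
    assert (Hpw : 0 < Cmod w) by (assert (H := Cmod_ge_0 w); lra).
    assert (B : Cmod (SI (gt f t) 0 w - (prim (gt f t 0) l 0 w - prim (gt f t 0) l 0 0)) <= (eps * Cmod w) * Cmod (w - 0)).
    { apply SI_aff_bound; auto.
      intros s Hs. unfold aff.
      assert (Hs1 : Cmod (seg 0 w s - 0) <= Cmod (w - 0)) by (apply seg_sub_start; auto).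
      replace (gt f t (seg 0 w s) - (gt f t 0 + l * (seg 0 w s - 0)))%C with
        (gt f t (seg 0 w s) - gt f t 0 - l * (seg 0 w s - 0))%C by ring.
      eapply Rle_trans; [apply Hdw; lra|].
      replace (w - 0)%C with w in Hs1 by ring.
      apply Rmult_le_compat_l; lra. }
    replace (w - 0)%C with w in * by ring.
    apply Rle_trans with (/ Cmod w * (eps * Cmod w * Cmod w)).
    + apply Rmult_le_compat_l; auto. apply Rlt_le, Rinv_0_lt_compat; auto.
    + right. field. lra.
Qed.

Lemma cesaro_hol (t : R) (f : C -> C) : holomorphic_on_disc f -> 0 <= t <= 1 ->
  holomorphic_on_disc (cesaro t f).
Proof.
  intros Hf Ht z Hz. destruct (Req_EM_T (Cmod z) 0) as [E|E].
  - apply Cmod_eq_0 in E. subst z. apply cesaro_derive_0; auto.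
  - apply cesaro_derive_nz; auto.
Qed.

Lemma disc0 : in_disc (RtoC 0).
Proof. unfold in_disc. rewrite Cmod_0. lra. Qed.

Lemma sup_spec (h : C -> C) (M : R) : (forall z, in_disc z -> Cmod (h z) <= M) ->
  (forall z, in_disc z -> Cmod (h z) <= supnorm h) /\
  (forall B, (forall z, in_disc z -> Cmod (h z) <= B) -> supnorm h <= B).
Proof.
  intros HM. unfold supnorm.
  set (E := fun r => exists z : C, in_disc z /\ r = Cmod (h z)).
  destruct (Lub_Rbar_correct E) as [Hub Hleast].
  destruct (Lub_Rbar E) as [r| |] eqn:Hl; simpl.
  - split.
    + intros z Hz. assert (H := Hub (Cmod (h z)) (ex_intro _ z (conj Hz eq_refl))). exact H.
    + intros B HB. assert (H := Hleast (Finite B)). simpl in H. apply H.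
      intros x [z [Hz ->]]. simpl. apply HB; auto.
  - exfalso. assert (H := Hleast (Finite M)). simpl in H. apply H.
    intros x [z [Hz ->]]. simpl. apply HM; auto.
  - exfalso. assert (H := Hub (Cmod (h (RtoC 0))) (ex_intro _ (RtoC 0) (conj disc0 eq_refl))). exact H.
Qed.

Lemma sup_ub (h : C -> C) : (exists M, forall z, in_disc z -> Cmod (h z) <= M) ->
  forall z, in_disc z -> Cmod (h z) <= supnorm h.
Proof. intros [M HM]. exact (proj1 (sup_spec h M HM)). Qed.

Lemma sup_le (h : C -> C) (B : R) : (forall z, in_disc z -> Cmod (h z) <= B) -> supnorm h <= B.
Proof. intros HB. exact (proj2 (sup_spec h B HB) B HB). Qed.

Lemma int_log (M a : R) : 0 < a < 1 ->
  is_RInt (fun s => M / (1 - a * s)) 0 1 (M * (- ln (1 - a) / a)).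
Proof.
  intros Ha.
  assert (H := @is_RInt_derive R_CompleteNormedModule (fun s => - M * ln (1 - a * s) / a) (fun s => M / (1 - a * s)) 0 1).
  replace (M * (- ln (1 - a) / a)) with (minus (- M * ln (1 - a * 1) / a) (- M * ln (1 - a * 0) / a) : R).
  - apply H.
    + intros x Hx. rewrite Rmin_left, Rmax_right in Hx by lra.
      auto_derive. nra. field; repeat split; nra.
    + intros x Hx. rewrite Rmin_left, Rmax_right in Hx by lra.
      apply (ex_derive_continuous (K := R_AbsRing) (V := R_NormedModule)). auto_derive. nra.
  - unfold minus, plus, opp; simpl. replace (1 - a * 0) with 1 by ring. rewrite ln_1.
    replace (1 - a * 1) with (1 - a) by ring. field. lra.
Qed.

Lemma seg0 (z : C) (s : R) : seg 0 z s = (RtoC s * z)%C.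
Proof. unfold seg. ring. Qed.

Lemma cesaro_bound_nz (t : R) (f : C -> C) (M : R) (B : R -> R) (IB : R) (z : C) :
  holomorphic_on_disc f -> 0 <= t < 1 ->
  (forall w, Cmod w < 1 -> Cmod (f w) <= M) ->
  (forall s, 0 <= s <= 1 -> M / (1 - t * s) <= B s) ->
  is_RInt B 0 1 IB -> Cmod z < 1 -> Cmod z <> 0 ->
  Cmod (cesaro t f z) <= IB.
Proof.
  intros Hf Ht HM HB HI Hz Hz0.
  assert (Hgh := gt_hol f t Hf ltac:(lra)). assert (Hg := contD_of_hol _ Hgh).
  assert (H01 : Cmod (RtoC 0) < 1) by (rewrite Cmod_0; lra).
  assert (HM0 : 0 <= M) by (eapply Rle_trans; [apply Cmod_ge_0| apply (HM (RtoC 0) H01)]).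
  rewrite cesaro_SI by auto.
  assert (Hpz : 0 < Cmod z) by (assert (H := Cmod_ge_0 z); lra).
  assert (Hzn : z <> 0%C) by (apply Cmod_gt_0; auto).
  rewrite Cmod_mult, Cmod_inv by auto.
  assert (HS := is_RInt_SI (gt f t) 0 z Hg H01 Hz).
  assert (HIs := @is_RInt_scal R_NormedModule B 0 1 (Cmod z) IB HI).
  assert (Hbd : forall x, 0 <= x <= 1 -> Cmod (gt f t (seg 0 z x) * (z - 0))%C <= scal (Cmod z) (B x)).
  { intros x Hx. rewrite seg0. replace (z - 0)%C with z by ring.
    unfold gt. rewrite Cmod_mult, Cmod_div.
    2:{ apply den_nz. lra. rewrite Cmod_mult, Cmod_RtoC_nonneg by lra. nra. }
    assert (Hxz : Cmod (RtoC x * z) <= x) by (rewrite Cmod_mult, Cmod_RtoC_nonneg by lra; nra).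
    assert (Hd := den_bound t (RtoC x * z)%C ltac:(lra)).
    assert (Htx : t * Cmod (RtoC x * z)%C <= t * x) by (apply Rmult_le_compat_l; lra).
    assert (Hd1 : 1 - t * x <= Cmod (RtoC 1 - RtoC t * (RtoC x * z))%C) by lra.
    assert (Htx1 : t * x <= t) by (rewrite <- (Rmult_1_r t) at 2; apply Rmult_le_compat_l; lra).
    assert (Hpos : 0 < 1 - t * x) by lra.
    assert (Hfx : Cmod (f (RtoC x * z)%C) <= M).
    { apply HM. assert (Hxz2 : Cmod (RtoC x * z)%C <= Cmod z).
      { rewrite Cmod_mult, Cmod_RtoC_nonneg by lra. assert (H0 := Cmod_ge_0 z). nra. }
      lra. }
    unfold scal; simpl. unfold mult; simpl. rewrite Rmult_comm.
    apply Rmult_le_compat_l. apply Cmod_ge_0.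
    eapply Rle_trans; [|apply HB; auto].
    unfold Rdiv. apply Rmult_le_compat; auto. apply Cmod_ge_0.
    apply Rlt_le, Rinv_0_lt_compat. lra.
    apply Rinv_le_contravar; lra. }
  assert (L := @norm_RInt_le C_R_NormedModule _ (fun x => scal (Cmod z) (B x)) 0 1 _ _ Rle_0_1
     (fun x Hx => ltac:(rewrite normCR; exact (Hbd x Hx))) HS HIs).
  rewrite normCR in L.
  apply Rle_trans with (/ Cmod z * (Cmod z * IB)).
  - apply Rmult_le_compat_l. apply Rlt_le, Rinv_0_lt_compat; auto. exact L.
  - right. field. lra.
Qed.

Lemma M_nonneg (f : C -> C) (M : R) : (forall w, Cmod w < 1 -> Cmod (f w) <= M) -> 0 <= M.
Proof. intros HM. eapply Rle_trans; [apply Cmod_ge_0| apply (HM (RtoC 0)); rewrite Cmod_0; lra]. Qed.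

Lemma cesaro_bound_crude (t : R) (f : C -> C) (M : R) :
  holomorphic_on_disc f -> 0 <= t < 1 -> (forall w, Cmod w < 1 -> Cmod (f w) <= M) ->
  forall z, Cmod z < 1 -> Cmod (cesaro t f z) <= M / (1 - t).
Proof.
  intros Hf Ht HM z Hz.
  assert (HM0 := M_nonneg f M HM).
  assert (HMt : M <= M / (1 - t)).
  { apply (Rmult_le_reg_r (1 - t)); [lra|]. unfold Rdiv. rewrite Rmult_assoc, Rinv_l by lra. nra. }
  destruct (Req_EM_T (Cmod z) 0) as [E|E].
  - apply Cmod_eq_0 in E. subst z. rewrite cesaro_0. eapply Rle_trans; [apply HM; rewrite Cmod_0; lra| exact HMt].
  - assert (HI := @is_RInt_const R_NormedModule 0 1 (M / (1 - t))).
    eapply Rle_trans. apply (cesaro_bound_nz t f M (fun _ => M / (1 - t)) _ z Hf Ht HM); [| exact HI | auto | auto].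
    + intros s Hs. unfold Rdiv. apply Rmult_le_compat_l; auto. apply Rinv_le_contravar. lra.
      assert (t * s <= t) by (rewrite <- (Rmult_1_r t) at 2; apply Rmult_le_compat_l; lra). lra.
    + unfold scal; simpl. unfold mult; simpl. lra.
Qed.

Lemma N_ge1 (t : R) : 0 < t < 1 -> 1 <= - ln (1 - t) / t.
Proof.
  intros Ht. assert (H := exp_ineq1_le (- t)).
  assert (H2 : ln (1 - t) <= ln (exp (- t))) by (apply ln_le; lra).
  rewrite ln_exp in H2.
  apply (Rmult_le_reg_r t); [lra|]. unfold Rdiv. rewrite Rmult_assoc, Rinv_l by lra. lra.
Qed.

Lemma cesaro_bound_sharp (t : R) (f : C -> C) (M : R) :
  holomorphic_on_disc f -> 0 < t < 1 -> (forall w, Cmod w < 1 -> Cmod (f w) <= M) ->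
  forall z, Cmod z < 1 -> Cmod (cesaro t f z) <= M * (- ln (1 - t) / t).
Proof.
  intros Hf Ht HM z Hz.
  assert (HM0 := M_nonneg f M HM). assert (HN := N_ge1 t Ht).
  destruct (Req_EM_T (Cmod z) 0) as [E|E].
  - apply Cmod_eq_0 in E. subst z. rewrite cesaro_0. eapply Rle_trans; [apply HM; rewrite Cmod_0; lra|]. nra.
  - apply (cesaro_bound_nz t f M (fun s => M / (1 - t * s)) _ z Hf ltac:(lra) HM); auto.
    + intros; lra.
    + apply int_log; auto.
Qed.

Lemma hol_minus (f g : C -> C) : holomorphic_on_disc f -> holomorphic_on_disc g ->
  holomorphic_on_disc (fun w => Cminus (g w) (f w)).
Proof.
  intros Hf Hg z Hz. destruct (Hf z Hz) as [df Hdf]. destruct (Hg z Hz) as [dg Hdg].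
  exists (minus dg df). exact (@is_derive_minus C_AbsRing C_NormedModule g f z dg df Hdg Hdf).
Qed.

Lemma hol_const (c : C) : holomorphic_on_disc (fun _ => c).
Proof. intros z Hz. exists zero. apply (@is_derive_const C_AbsRing C_NormedModule). Qed.

Lemma cesaro_minus (t : R) (f g : C -> C) (z : C) :
  holomorphic_on_disc f -> holomorphic_on_disc g -> 0 <= t < 1 -> Cmod z < 1 ->
  Cminus (cesaro t g z) (cesaro t f z) = cesaro t (fun w => Cminus (g w) (f w)) z.
Proof.
  intros Hf Hg Ht Hz.
  destruct (Req_EM_T (Cmod z) 0) as [E|E].
  - apply Cmod_eq_0 in E. subst z. rewrite !cesaro_0. reflexivity.
  - rewrite !cesaro_SI by auto.
    assert (H01 : Cmod (RtoC 0) < 1) by (rewrite Cmod_0; lra).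
    assert (Cf := contD_of_hol _ (gt_hol f t Hf ltac:(lra))).
    assert (Cg := contD_of_hol _ (gt_hol g t Hg ltac:(lra))).
    assert (E2 : (SI (gt g t) 0 z - SI (gt f t) 0 z)%C = SI (gt (fun w => (g w - f w)%C) t) 0 z).
    { unfold SI. rewrite <- minus_CR.
      rewrite <- (@RInt_minus C_R_CompleteNormedModule).
      - apply (@RInt_ext C_R_CompleteNormedModule). intros x _. rewrite minus_CR. unfold gt, Cdiv.
        match goal with |- ?x = ?y => change (@eq C x y) end. ring.
      - apply ex_RInt_seg; auto.
      - apply ex_RInt_seg; auto. }
    rewrite <- E2. ring.
Qed.

Lemma cesaro_one_real (t r : R) : 0 < t < 1 -> 0 < r < 1 ->
  Cmod (cesaro t (fun _ => RtoC 1) (RtoC r)) = - ln (1 - t * r) / (t * r).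
Proof.
  intros Ht Hr.
  assert (Htr : 0 < t * r < 1) by (split; nra).
  assert (Hr0 : Cmod (RtoC r) <> 0) by (rewrite Cmod_RtoC_nonneg; lra).
  rewrite cesaro_SI by auto.
  assert (HS : SI (gt (fun _ => RtoC 1) t) 0 (RtoC r) = RtoC (r * (- ln (1 - t * r) / (t * r)))).
  { unfold SI. apply (@is_RInt_unique C_R_CompleteNormedModule).
    assert (H1 := int_log r (t * r) Htr).
    assert (H0 : is_RInt (fun _ : R => 0) 0 1 0).
    { assert (H := @is_RInt_const R_NormedModule 0 1 0).
      match type of H with is_RInt _ _ _ ?w => assert (Ev : w = 0) end.
      { unfold scal; simpl. unfold mult; simpl. ring. }
      rewrite Ev in H. exact H. }
    assert (HP := @is_RInt_fct_extend_pair R_NormedModule R_NormedModule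
                    (fun s => (r / (1 - t * r * s), 0)) 0 1 _ _ H1 H0).
    eapply (@is_RInt_ext C_R_NormedModule); [|exact HP].
    intros x Hx. rewrite Rmin_left, Rmax_right in Hx by lra.
    unfold gt. rewrite seg0.
    assert (Hd : 1 - t * r * x <> 0).
    { assert (t * r * x < 1). { apply Rle_lt_trans with (t * r). rewrite <- (Rmult_1_r (t * r)) at 2.
        apply Rmult_le_compat_l; lra. lra. } lra. }
    change ((r / (1 - t * r * x), 0) : C) with (RtoC (r / (1 - t * r * x))).
    rewrite RC_div by auto. rewrite RC_minus, !RC_mult.
    match goal with |- ?x = ?y => change (@eq C x y) end.
    field. intros E. apply Hd. apply (f_equal fst) in E. simpl in E. nra. }
  rewrite HS, Cmod_mult, Cmod_inv, !Cmod_RtoC_nonneg.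
  - field. split; nra.
  - apply Rmult_le_pos; [lra|]. apply Rdiv_le_0_compat; [|nra].
    assert (ln (1 - t * r) < ln 1) by (apply ln_increasing; lra). rewrite ln_1 in H. lra.
  - lra.
  - intros E. apply Hr0. rewrite E. apply Cmod_0.
Qed.

Lemma phi_cont (t : R) : 0 < t < 1 -> forall eps, 0 < eps ->
  exists r, 0 < r < 1 /\ - ln (1 - t) / t - eps < - ln (1 - t * r) / (t * r).
Proof.
  intros Ht eps He.
  assert (Hc : continuous (fun r => - ln (1 - t * r) / (t * r)) 1).
  { apply (ex_derive_continuous (K := R_AbsRing) (V := R_NormedModule)). auto_derive. split; [nra| split; nra]. }
  destruct (Hc _ (locally_ball _ (mkposreal eps He))) as [d Hd].
  set (r := Rmax (1/2) (1 - d / 2)).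
  assert (Hd0 := cond_pos d).
  assert (Hr1 : 1/2 <= r) by apply Rmax_l.
  assert (Hr2 : 1 - d / 2 <= r) by apply Rmax_r.
  assert (Hr3 : r < 1) by (unfold r; apply Rmax_lub_lt; lra).
  exists r. split. lra.
  assert (Hb : ball 1 d r).
  { change (Rabs (r - 1) < d). rewrite Rabs_left by lra. lra. }
  specialize (Hd r Hb).
  change (Rabs (- ln (1 - t * r) / (t * r) - - ln (1 - t * 1) / (t * 1)) < eps) in Hd.
  rewrite !Rmult_1_r in Hd. apply Rabs_def2 in Hd. lra.
Qed.

Lemma Hinf_one : Hinf (fun _ => RtoC 1).
Proof.
  split. apply hol_const. exists 1. intros z _. rewrite Cmod_RtoC_nonneg; lra.
Qed.

Lemma sup_one : supnorm (fun _ => RtoC 1) <= 1.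
Proof. apply sup_le. intros z _. rewrite Cmod_RtoC_nonneg; lra. Qed.

Theorem proposition2p3 :
  (forall t : R, 0 <= t < 1 ->
     (forall f : C -> C, Hinf f -> Hinf (cesaro t f)) /\
     (forall f : C -> C, Hinf f ->
        forall eps : R, 0 < eps -> exists delta : R, 0 < delta /\
          forall g : C -> C, Hinf g ->
            supnorm (fun z => Cminus (g z) (f z)) < delta ->
            supnorm (fun z => Cminus (cesaro t g z) (cesaro t f z)) < eps)) /\
  cesaro_opnorm_is 0 1 /\
  (forall t : R, 0 < t < 1 -> cesaro_opnorm_is t (- ln (1 - t) / t)).
Proof.
  split; [|split].
  - intros t Ht. split.
    + intros f [Hf [M HM]]. split.
      * apply cesaro_hol; auto; lra.
      * exists (M / (1 - t)). intros z Hz. apply cesaro_bound_crude; auto.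
    + intros f [Hf [Mf HMf]] eps He. exists (eps * (1 - t)). split. { nra. }
      intros g [Hg [Mg HMg]] Hs.
      set (h := fun z => Cminus (g z) (f z)) in *.
      assert (Hh : holomorphic_on_disc h) by (apply hol_minus; auto).
      assert (Hhb : forall w, in_disc w -> Cmod (h w) <= supnorm h).
      { apply sup_ub. exists (Mg + Mf). intros w Hw. unfold h.
        eapply Rle_trans; [apply Cmod_triangle|]. rewrite Cmod_opp.
        apply Rplus_le_compat; auto. }
      apply Rle_lt_trans with (supnorm h / (1 - t)).
      * apply sup_le. intros z Hz. rewrite cesaro_minus; auto.
        apply cesaro_bound_crude; auto.
      * apply (Rmult_lt_reg_r (1 - t)); [lra|]. unfold Rdiv. rewrite Rmult_assoc, Rinv_l by lra. lra.
  - split.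
    + intros x [f [[Hf [M HM]] [Hs ->]]].
      assert (HS : forall w, in_disc w -> Cmod (f w) <= supnorm f) by (apply sup_ub; exists M; auto).
      apply sup_le. intros z Hz.
      eapply Rle_trans; [apply (cesaro_bound_crude 0 f (supnorm f) Hf ltac:(lra) HS z Hz)|].
      replace (supnorm f / (1 - 0)) with (supnorm f) by field. exact Hs.
    + intros b Hb.
      assert (Hx : 1 <= supnorm (cesaro 0 (fun _ => RtoC 1))).
      { assert (H := sup_ub (cesaro 0 (fun _ => RtoC 1))).
        apply Rle_trans with (Cmod (cesaro 0 (fun _ => RtoC 1) (RtoC 0))).
        { right. rewrite cesaro_0, Cmod_RtoC_nonneg; lra. }
        apply H; [| apply disc0].
        exists (1 / (1 - 0)). intros z Hz. apply cesaro_bound_crude; auto. apply hol_const. lra.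
        intros; rewrite Cmod_RtoC_nonneg; lra. }
      eapply Rle_trans; [exact Hx|]. apply Hb. exists (fun _ => RtoC 1).
      split; [apply Hinf_one| split; [apply sup_one| reflexivity]].
  - intros t Ht. set (N := - ln (1 - t) / t). assert (HN := N_ge1 t Ht). fold N in HN.
    split.
    + intros x [f [[Hf [M HM]] [Hs ->]]].
      assert (HS : forall w, in_disc w -> Cmod (f w) <= supnorm f) by (apply sup_ub; exists M; auto).
      apply sup_le. intros z Hz.
      eapply Rle_trans; [apply (cesaro_bound_sharp t f (supnorm f) Hf Ht HS z Hz)|].
      fold N. assert (0 <= supnorm f) by (eapply Rle_trans; [apply Cmod_ge_0| apply (HS (RtoC 0) disc0)]).
      nra.
    + intros b Hb. destruct (Rle_lt_dec N b) as [Hle|Hlt]; auto.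
      exfalso.
      destruct (phi_cont t Ht (N - b) ltac:(lra)) as [r [Hr Hphi]].
      fold N in Hphi.
      assert (Hx : - ln (1 - t * r) / (t * r) <= supnorm (cesaro t (fun _ => RtoC 1))).
      { rewrite <- cesaro_one_real by auto.
        apply sup_ub.
        - exists (1 / (1 - t)). intros z Hz. apply cesaro_bound_crude; auto. apply hol_const. lra.
          intros; rewrite Cmod_RtoC_nonneg; lra.
        - unfold in_disc. rewrite Cmod_RtoC_nonneg; lra. }
      assert (Hy : supnorm (cesaro t (fun _ => RtoC 1)) <= b).
      { apply Hb. exists (fun _ => RtoC 1). split; [apply Hinf_one| split; [apply sup_one| reflexivity]]. }
      lra.
Qed.
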